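(* (Furstenberg–Katznelson theorem for located words.) Let $A,B$ be finite disjoint sets and $x\notin A\cup B$ a variable. Let $F$ be a finite set of reduced strings in $A$. For every coloring of $\langle(X_n(A\cup B))\rangle$ with finitely many colors, there exists a basic sequence $(w_i)$ in $\langle(X_n(B))\rangle$ such that $x$ occurs in each $w_i$ and, for all $n_0<\cdots<n_k$ and $c_0,\dots,c_k\in A\cup B$, the color of $w_{n_0}[c_0]\cdots w_{n_k}[c_k]$ depends only on $\overline{c_0\cdots c_k}$, provided $\overline{c_0\cdots c_k}\in F$.
   Context: For a set $C$ with $x\notin C$, $X_n(C)=\{n\}\times(C\cup\{x\})$. For a sequence of sets $(X_n)$, $\langle(X_n)\rangle$ is the set of finite sequences $y_1\cdots y_k$ for which there are $m_1<\cdots<m_k$ with $y_i\in X_{m_i}$ (located words); it is a partial semigroup: the product of $y_1\cdots y_k$ and $z_1\cdots z_l$ is defined iff there are $m_1<\cdots<m_k<p_1<\cdots<p_l$ with $y_i\in X_{m_i}$, $z_j\in X_{p_j}$, and then it is the concatenation. Note $\langle(X_n(B))\rangle\subseteq\langle(X_n(A\cup B))\rangle$. A sequence $(w_i)$ is basic in $\langle(X_n(B))\rangle$ if $w_{i_1}\cdots w_{i_k}$ is defined for all $i_1<\cdots<i_k$. ''$x$ occurs in $w$'' means some entry of $w$ is of the form $(m,x)$; for such $w$ and $c\in A\cup B\cup\{x\}$, $w[c]$ is obtained by replacing every entry $(m,x)$ by $(m,c)$. A reduced string in $A$ is a (possibly empty) sequence $a_0\cdots a_k$ of elements of $A$ with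 $a_i\neq a_{i+1}$ for all $i<k$. For a sequence $c_0\cdots c_k$ of elements of $A\cup B$, $\overline{c_0\cdots c_k}$ is the reduced string obtained by deleting all entries in $B$ and then replacing each maximal run of a repeated element of $A$ by a single occurrence of it. *)

(* Defs.v *)
From mathcomp Require Import all_boot.
Set Implicit Arguments. Unset Strict Implicit. Unset Printing Implicit Defensive.

(* w is an element of <(X_n(C))>, where X_n(C) = {n} x (C \cup {x}). *)
Definition located_word (T : eqType) (x : T) (C : seq T) (w : seq (nat * T)) : bool :=
  [&& w != [::], sorted ltn (map fst w) & all (fun p => (p.2 \in C) || (p.2 == x)) w].

(* The product of located words is defined iff the concatenation is again a
   located word (positions strictly increase across the blocks). *)
Definition basic_seq (T : eqType) (x : T) (C : seq T) (w : nat -> seq (nat * T)) : Prop :=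
  (forall i, located_word x C (w i)) /\
  (forall s : seq nat, s != [::] -> sorted ltn s ->
     located_word x C (flatten (map w s))).

Definition occurs (T : eqType) (x : T) (w : seq (nat * T)) : bool :=
  has (fun p => p.2 == x) w.

Definition subst (T : eqType) (x : T) (w : seq (nat * T)) (c : T) : seq (nat * T) :=
  map (fun p => (p.1, if p.2 == x then c else p.2)) w.

Fixpoint collapse (T : eqType) (s : seq T) : seq T :=
  match s with
  | [::] => [::]
  | a :: t =>
      match collapse t with
      | [::] => [:: a]
      | b :: u => if a == b then b :: u else a :: b :: u
      end
  end.

(* overline(c_0 ... c_k): delete entries in B (i.e. keep those in A, as all
   c_i lie in A \cup B with A, B disjoint), then collapse runs. *)
Definition reduce_str (T : eqType) (A B : seq T) (cs : seq T) : seq T :=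
  collapse (filter (fun c => c \notin B) cs).

Definition reduced_in (T : eqType) (A : seq T) (s : seq T) : bool :=
  all (fun a => a \in A) s && sorted (fun a b => a != b) s.

Definition subst_prod (T : eqType) (x : T) (w : nat -> seq (nat * T))
  (ns : seq nat) (cs : seq T) : seq (nat * T) :=
  flatten [seq subst x (w p.1) p.2 | p <- zip ns cs].

(* Main.v *)
Require Import Defs.
From mathcomp Require Import all_boot.
From mathcomp Require Import boolp classical_sets.
From Stdlib Require List.
Set Implicit Arguments. Unset Strict Implicit. Unset Printing Implicit Defensive.

Section Ultra.
Variable U : Type.
Lemma NNPP (P : Prop) : ~ ~ P -> P.
Proof. by case: (EM P) => // h /(_ h). Qed.

Definition fam := (U -> Prop) -> Prop.

Definition ultra (p : fam) : Prop :=
  [/\ (forall X Y, p X -> p Y -> p (fun u => X u /\ Y u)),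
      (forall X Y : U -> Prop, (forall u, X u -> Y u) -> p X -> p Y),
      ~ p (fun _ => False) &
      (forall X, p X \/ p (fun u => ~ X u))].

Definition allL (l : seq (U -> Prop)) (u : U) := forall X, List.In X l -> X u.

Definition fip (F : fam) := forall l : seq (U -> Prop),
  (forall X, List.In X l -> F X) -> exists u, allL l u.

Lemma ultraI p X Y : ultra p -> p X -> p Y -> p (fun u => X u /\ Y u).
Proof. by case=> h *; apply: h. Qed.
Lemma ultraW p (X Y : U -> Prop) : ultra p -> (forall u, X u -> Y u) -> p X -> p Y.
Proof. by case=> _ h _ _; apply: h. Qed.
Lemma ultra0 p : ultra p -> ~ p (fun _ => False).
Proof. by case. Qed.
Lemma ultraC p X : ultra p -> p X \/ p (fun u => ~ X u).
Proof. by case=> _ _ _; apply. Qed.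
Lemma ultraT p : ultra p -> p (fun _ => True).
Proof. move=> up; case: (@ultraC p (fun _ : U => True) up) => // h.
by exact: (ultraW up (fun u _ => I) h). Qed.
Lemma ultra_ne p X : ultra p -> p X -> exists u, X u.
Proof. move=> up pX; case: (EM (exists u, X u)) => // hn.
exfalso; apply: (ultra0 up); apply: (ultraW up _ pX) => u Xu; apply: hn; by exists u. Qed.
Lemma ultra_not p X : ultra p -> p X -> ~ p (fun u => ~ X u).
Proof. move=> up pX pnX; have [u []] := ultra_ne up (ultraI up pX pnX); done. Qed.
Lemma ultra_ext p (X Y : U -> Prop) : ultra p -> (forall u, X u <-> Y u) -> p X -> p Y.
Proof. by move=> up h; apply: (ultraW up) => u /h. Qed.
Lemma ultra_eq p q : ultra p -> ultra q -> (forall X, p X -> q X) -> p = q.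
Proof.
move=> up uq h; apply: funext => X; apply: propext; split; first exact: h.
move=> qX; case: (@ultraC p X up) => // /h qnX; by case: (ultra_not uq qX).
Qed.
Lemma ultra_allL p l : ultra p -> (forall X, List.In X l -> p X) -> p (allL l).
Proof.
move=> up; elim: l => [|Y l IH] h.
  by apply: (ultraW up _ (ultraT up)) => u _ X [].
have := ultraI up (h Y (or_introl erefl)) (IH (fun X hX => h X (or_intror hX))).
by apply: (ultraW up) => u [Yu hl] X [<-|/hl].
Qed.

Lemma chain_list (I : Type) (P : I -> Prop) (G : I -> fam) (l : seq (U -> Prop)) :
  (exists i, P i) ->
  (forall i j, P i -> P j -> (forall X, G i X -> G j X) \/ (forall X, G j X -> G i X)) ->
  (forall X, List.In X l -> exists i, P i /\ G i X) ->
  exists i, P i /\ forall X, List.In X l -> G i X.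
Proof.
move=> [i0 Pi0] tot; elim: l => [|Y l IH] h.
  by exists i0; split => // X [].
have [i [Pi Gi]] := IH (fun X hX => h X (or_intror hX)).
have [j [Pj Gj]] := h Y (or_introl erefl).
case: (tot i j Pi Pj) => hij.
  exists j; split => // X [<-|hX] //; exact: hij (Gi _ hX).
exists i; split => // X [<-|hX]; [exact: hij | exact: Gi].
Qed.

Lemma fip_split (M : fam) (Z : U -> Prop) l :
  (forall X, List.In X l -> M X \/ X = Z) ->
  exists l', (forall X, List.In X l' -> M X) /\ forall u, Z u -> allL l' u -> allL l u.
Proof.
elim: l => [|Y l IH] h.
  by exists [::]; split => // X [].
have [l' [Ml' hl']] := IH (fun X hX => h X (or_intror hX)).
case: (h Y (or_introl erefl)) => [MY|->].
  exists (Y :: l'); split; first by move=> X [<-|/Ml'].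
  move=> u Zu al X [<-|hX]; first by apply: al; left.
  by apply: (hl' u Zu (fun X hX => al X (or_intror hX))).
exists l'; split => // u Zu al X [<-|hX] //; exact: hl'.
Qed.

Lemma ultrafilter_lemma (F : fam) : fip F -> exists p, ultra p /\ forall X, F X -> p X.
Proof.
move=> fF.
pose P : set (set (U -> Prop)) := fun H => fip (fun X => F X \/ H X).
have [A [PA maxA]] : exists A, P A /\ forall B, proper A B -> ~ P B.
  apply: Zorn_bigcup => C CP tot l hl.
  case: (EM (exists G, C G)) => [neC|eC].
    have [G [CG hG]] := @chain_list _ C (fun G X => F X \/ G X) l neC
      (fun i j Ci Cj => match tot i j Ci Cj with
                        | or_introl h => or_introl (fun X hX => match hX with
                             or_introl a => or_introl a | or_intror b => or_intror (h X b) end)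
                        | or_intror h => or_intror (fun X hX => match hX with
                             or_introl a => or_introl a | or_intror b => or_intror (h X b) end) end)
      (fun X hX => match hl X hX with
                   | or_introl a => let: ex_intro G CG := neC in ex_intro _ G (conj CG (or_introl a))
                   | or_intror (ex_intro2 G CG GX) => ex_intro _ G (conj CG (or_intror GX)) end).
    exact: (CP G CG l hG).
  apply: fF => X /hl [//|[G CG _]]; case: eC; by exists G.
pose M X := F X \/ A X.
have key : forall Z, (forall l, (forall X, List.In X l -> M X) -> exists u, Z u /\ allL l u) -> M Z.
  move=> Z hZ; case: (EM (A Z)) => AZ; first by right.
  exfalso; apply: (maxA (fun X => A X \/ X = Z)).
    split; first by move=> X; left.
    by move=> h; apply: AZ; apply: h; right.
  move=> l hl.
  have [l' [Ml' hl']] := @fip_split M Z l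
     (fun X hX => match hl X hX with
                  | or_introl a => or_introl (or_introl a)
                  | or_intror (or_introl a) => or_introl (or_intror a)
                  | or_intror (or_intror e) => or_intror e end).
  have [u [Zu al]] := hZ l' Ml'; exists u; exact: hl'.
have fipM : forall l, (forall X, List.In X l -> M X) -> exists u, allL l u by [].
exists M; split; last by move=> X; left.
split.
- move=> X Y MX MY; apply: key => l hl.
  have [u hu] := fipM (X :: Y :: l) (fun Z hZ => match hZ with
     | or_introl e => eq_ind X M MX Z e
     | or_intror (or_introl e) => eq_ind Y M MY Z e
     | or_intror (or_intror h) => hl Z h end).
  exists u; split; first by split; apply: hu; [left|right; left].
  by move=> Z hZ; apply: hu; right; right.
- move=> X Y XY MX; apply: key => l hl.
  have [u hu] := fipM (X :: l) (fun Z hZ => match hZ with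
     | or_introl e => eq_ind X M MX Z e
     | or_intror h => hl Z h end).
  exists u; split; first by apply: XY; apply: hu; left.
  by move=> Z hZ; apply: hu; right.
- move=> M0; have [u hu] := fipM [:: fun _ => False] (fun Z hZ => match hZ with
     | or_introl e => eq_ind _ M M0 Z e | or_intror h => False_ind _ h end).
  by apply: (hu _ (or_introl erefl)).
- move=> X; case: (EM (M X)) => MX; [by left|right].
  case: (EM (M (fun u => ~ X u))) => // MnX; exfalso.
  have h1 : exists l, (forall Y, List.In Y l -> M Y) /\ forall u, allL l u -> ~ X u.
    apply: NNPP => hn; apply: MX; apply: key => l hl; apply: NNPP => hn2; apply: hn.
    exists l; split => // u al Xu; apply: hn2; by exists u.
  have h2 : exists l, (forall Y, List.In Y l -> M Y) /\ forall u, allL l u -> X u.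
    apply: NNPP => hn; apply: MnX; apply: key => l hl; apply: NNPP => hn2; apply: hn.
    exists l; split => // u al; apply: NNPP => Xu; apply: hn2; by exists u.
  have [l1 [M1 h1']] := h1; have [l2 [M2 h2']] := h2.
  have [u hu] := fipM (l1 ++ l2) (fun Y hY => match List.in_app_or _ _ _ hY with
      | or_introl a => M1 Y a | or_intror b => M2 Y b end).
  apply: (h1' u (fun Y hY => hu Y (List.in_or_app _ _ _ (or_introl hY)))).
  exact: (h2' u (fun Y hY => hu Y (List.in_or_app _ _ _ (or_intror hY)))).
Qed.

End Ultra.


Section Semi.
Variable E : Type.
Notation S := (seq E).

Definition K (H : fam S) : fam S -> Prop := fun p => ultra p /\ forall X, H X -> p X.
Definition umul (p q : fam S) : fam S := fun A => p (fun u => q (fun v => A (u ++ v))).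
Definition filt (X : fam S -> Prop) : fam S := fun A => forall y, X y -> y A.
Definition closedP (X : fam S -> Prop) :=
  forall z, ultra z -> (forall A, filt X A -> z A) -> X z.

Lemma K_ext H1 H2 : (forall X, H1 X <-> H2 X) -> K H1 = K H2.
Proof.
move=> h; apply: funext => p; apply: propext; rewrite /K; split=> -[up hp]; split=> // X /h; exact: hp.
Qed.

Lemma fip_of_K H p : K H p -> fip H.
Proof. move=> [up hp] l hl; apply: (ultra_ne up); apply: ultra_allL => // X /hl; exact: hp. Qed.

Lemma umul_ultra p q : ultra p -> ultra q -> ultra (umul p q).
Proof.
move=> up uq; split.
- move=> X Y pX pY; apply: (ultraW up _ (ultraI up pX pY)) => u [h1 h2].
  exact: ultraI.
- move=> X Y XY pX; apply: (ultraW up _ pX) => u; apply: (ultraW uq) => v; exact: XY.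
- move=> h; have [u] := ultra_ne up h; exact: ultra0.
- move=> X; case: (@ultraC _ p (fun u => q (fun v => X (u ++ v))) up) => h; [by left|right].
  apply: (ultraW up _ h) => u hu; case: (@ultraC _ q (fun v => X (u ++ v)) uq) => //.
Qed.

Lemma umulA p q r : umul (umul p q) r = umul p (umul q r).
Proof.
rewrite /umul; apply: funext => A; congr p; apply: funext => u; congr q; apply: funext => v.
by congr r; apply: funext => w; rewrite catA.
Qed.

Section ZornK.
Variables (F0 : fam S) (R : (fam S -> Prop) -> fam S -> Prop).
Hypothesis Rmono : forall K1 K2 y, (forall z, K1 z -> K2 z) -> R K1 y -> R K2 y.
Hypothesis Rult : forall H y, R (K H) y -> ultra y.
Definition Hid (K0 : fam S -> Prop) := forall y z, R K0 y -> K0 z -> K0 (umul y z).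
Hypothesis h0 : exists p, K F0 p.
Hypothesis h1 : Hid (K F0).

Lemma zorn_K : exists M, (forall X, F0 X -> M X) /\ (exists p, K M p) /\ Hid (K M) /\
  forall N, (forall X, M X -> N X) -> (exists p, K N p) -> Hid (K N) -> forall X, N X -> M X.
Proof.
pose P : set (set (S -> Prop)) := fun H =>
  (exists p, K (fun X => F0 X \/ H X) p) /\ Hid (K (fun X => F0 X \/ H X)).
have [A [PA maxA]] : exists A, P A /\ forall B, proper A B -> ~ P B.
  apply: Zorn_bigcup => C CP tot; split.
    case: (EM (exists G, C G)) => [neC|eC].
      apply: ultrafilter_lemma => l hl.
      have [G [CG hG]] := @chain_list _ _ C (fun G X => F0 X \/ G X) l neC
        (fun i j Ci Cj => match tot i j Ci Cj with
                        | or_introl h => or_introl (fun X hX => match hX with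
                             or_introl a => or_introl a | or_intror b => or_intror (h X b) end)
                        | or_intror h => or_intror (fun X hX => match hX with
                             or_introl a => or_introl a | or_intror b => or_intror (h X b) end) end)
        (fun X hX => match hl X hX with
                   | or_introl a => let: ex_intro G CG := neC in ex_intro _ G (conj CG (or_introl a))
                   | or_intror (ex_intro2 G CG GX) => ex_intro _ G (conj CG (or_intror GX)) end).
      have [p Kp] := (CP G CG).1; exact: (fip_of_K Kp) l hG.
    have [p [up hp]] := h0; exists p; split => // X [/hp //|[G CG _]].
    by case: eC; exists G.
  move=> y z Ry [uz hz]; split; first exact: umul_ultra (Rult Ry) uz.
  move=> X [F0X|[G CG GX]].
    have sub : forall q, K (fun X => F0 X \/ (\bigcup_(X0 in C) X0)%classic X) q -> K F0 q.
      by move=> q [uq hq]; split => // Y hY; apply: hq; left.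
    have := h1 (Rmono sub Ry) (conj uz (fun X hX => hz X (or_introl hX))).
    by case=> _ hh; apply: hh.
  have sub : forall q, K (fun X => F0 X \/ (\bigcup_(X0 in C) X0)%classic X) q -> K (fun X => F0 X \/ G X) q.
    move=> q [uq hq]; split => // Y [a|b]; apply: hq; [by left|right; by exists G].
  have := (CP G CG).2 y z (Rmono sub Ry) (conj uz (fun X hX => match hX with
      | or_introl a => hz X (or_introl a)
      | or_intror b => hz X (or_intror (ex_intro2 _ _ G CG b)) end)).
  by case=> _ hh; apply: hh; right.
exists (fun X => F0 X \/ A X); split; first by move=> X; left.
split; first exact: PA.1.
split; first exact: PA.2.
move=> N MN neN HN X NX; case: (EM (F0 X \/ A X)) => // nM; exfalso.
apply: (maxA N).
  split; first by move=> Y AY; apply: MN; right.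
  by move=> h; apply: nM; right; apply: h.
have e : K (fun X => F0 X \/ N X) = K N.
  by apply: K_ext => Y; split => [[/(fun h => MN _ (or_introl h))|]|] //; right.
by rewrite /P e.
Qed.
End ZornK.

Lemma image_closed G q : ultra q -> closedP (fun z => exists y, K G y /\ z = umul y q).
Proof.
move=> uq z uz hz.
pose rho (A : S -> Prop) := fun u => q (fun v => A (u ++ v)).
pose Y := fun B => G B \/ exists A, z A /\ B = rho A.
have fY : fip Y.
  move=> l hl.
  have [lG [hlG [A0 [zA0 hA0]]]] : exists lG, (forall X, List.In X lG -> G X) /\
      exists A0, z A0 /\ forall u, allL lG u -> rho A0 u -> allL l u.
    elim: l hl => [|B l IH] hl.
      exists [::]; split => //; exists (fun _ => True); split; first exact: ultraT.
      by move=> u _ _ X [].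
    have [lG [hlG [A0 [zA0 hA0]]]] := IH (fun X hX => hl X (or_intror hX)).
    case: (hl B (or_introl erefl)) => [GB|[A [zA ->]]].
      exists (B :: lG); split; first by move=> X [<-|/hlG].
      exists A0; split => // u al rA X [<-|hX]; first by apply: al; left.
      by apply: hA0 => // Z hZ; apply: al; right.
    exists lG; split => //; exists (fun w => A0 w /\ A w); split; first exact: ultraI.
    move=> u al rA X [<-|hX].
      by apply: (ultraW uq _ rA) => v [].
    by apply: hA0 => //; apply: (ultraW uq _ rA) => v [].
  case: (EM (exists u, allL lG u /\ rho A0 u)) => [[u [al ru]]|hn].
    by exists u; apply: hA0.
  exfalso.
  have : z (fun w => ~ A0 w).
    apply: hz => _ [y [[uy hy] ->]].
    have ylG : y (allL lG) by apply: ultra_allL => // X /hlG; apply: hy.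
    case: (@ultraC _ y (rho A0) uy) => yr.
      have [u [al ru]] := ultra_ne uy (ultraI uy ylG yr); case: hn; by exists u.
    apply: (ultraW uy _ yr) => u nr.
    by case: (@ultraC _ q (fun v => A0 (u ++ v)) uq).
  exact: ultra_not uz zA0.
have [y [uy hy]] := ultrafilter_lemma fY.
exists y; split; first by split => // X GX; apply: hy; left.
apply: ultra_eq => // [|A zA]; first exact: umul_ultra.
by apply: hy; right; exists A.
Qed.

Lemma Ellis (X : fam S -> Prop) : closedP X -> (forall y, X y -> ultra y) ->
  (exists y, X y) -> (forall y z, X y -> X z -> X (umul y z)) ->
  exists q, X q /\ umul q q = q.
Proof.
move=> cX uX [y0 Xy0] mX.
have KX : forall z, K (filt X) z <-> X z.
  move=> z; split => [[uz hz]|Xz]; first exact: cX.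
  by split; [exact: uX|move=> A; apply].
have [M [F0M [[q Kq] [HM maxM]]]] := @zorn_K (filt X) (fun K0 y => K0 y)
   (fun K1 K2 y h => h y) (fun H y Ky => ltac:(by case: Ky)) (ex_intro _ y0 (proj2 (KX y0) Xy0))
   (fun y z Ky Kz => proj2 (KX _) (mX _ _ (proj1 (KX y) Ky) (proj1 (KX z) Kz))).
have uq : ultra q by case: Kq.
pose Y := fun z => exists y, K M y /\ z = umul y q.
have cY := @image_closed M q uq.
have [y0' [Ky0 qe]] : exists y, K M y /\ q = umul y q.
  have NM := maxM (filt Y).
  have: forall A, filt Y A -> M A.
    apply: NM.
    - move=> A MA z [y [Ky ->]]; by case: (HM y q Ky Kq) => _; apply.
    - exists (umul q q); split; first exact: umul_ultra.
      move=> A; apply; by exists q.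
    - move=> y' z' [uy' hy'] [uz' hz'].
      have [y1 [Ky1 e1]] := cY y' uy' hy'.
      have [y2 [Ky2 e2]] := cY z' uz' hz'.
      have Y3 : Y (umul y' z').
        rewrite /Y e1 e2; exists (umul (umul y1 q) y2); split; last by rewrite [RHS]umulA.
        by apply: (HM) => //; apply: (HM).
      split; first exact: umul_ultra.
      by move=> A; apply.
  move=> FM; apply: cY => // A /FM; by case: Kq => _; apply.
pose N2 := fun B => M B \/ exists A, q A /\ B = (fun u => q (fun v => A (u ++ v))).
have : forall B, N2 B -> M B.
  apply: maxM; first by move=> B MB; left.
  - exists y0'; split; first by case: Ky0.
    move=> B [/(proj2 Ky0) //|[A [qA ->]]].
    by move: qA; rewrite {1}qe.
  - move=> y z [uy hy] [uz hz].
    have Kyz : K M (umul y z).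
      by apply: (HM); split => // B MB; [apply: hy|apply: hz]; left.
    split; first by case: Kyz.
    move=> B [MB|[A [qA ->]]]; first by case: Kyz => _; apply.
    have ezq : umul z q = q.
      apply: esym; apply: ultra_eq => //; first exact: umul_ultra.
      move=> A' qA'; exact: (hz _ (or_intror (ex_intro _ A' (conj qA' erefl)))).
    have : umul y (umul z q) A by rewrite ezq; exact: (hy _ (or_intror (ex_intro _ A (conj qA erefl)))).
    by rewrite -umulA.
move=> N2M; exists q; split.
  apply: cX => // A fA; case: Kq => _; apply; exact: F0M.
apply: esym; apply: ultra_eq => //; first exact: umul_ultra.
move=> A qA; case: Kq => _; apply; apply: N2M; right; by exists A.
Qed.

End Semi.


Section Gam.
Variable T : Type.
Notation S := (seq (nat * T)).

Definition tl (N : nat) (u : S) : Prop := all (fun e => N < e.1) u.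
Definition maxpos (u : S) : nat := \max_(e <- u) e.1.
Definition fam0 (D : S -> Prop) : fam S := fun X => X = D \/ exists N, X = tl N.
Definition gam D := K (fam0 D).
Definition catcl (D1 D2 D3 : S -> Prop) :=
  forall u v, D1 u -> D2 v -> tl (maxpos u) v -> D3 (u ++ v).

Lemma gamE D p : gam D p <-> [/\ ultra p, p D & forall N, p (tl N)].
Proof.
split => [[up hp]|[up pD pt]]; first by split => // [|N]; apply: hp; [left|right; exists N].
by split => // X [->|[N ->]].
Qed.

Lemma gam_ultra D p : gam D p -> ultra p. Proof. by case. Qed.

Lemma gam_umul D1 D2 D3 y z : catcl D1 D2 D3 -> gam D1 y -> gam D2 z -> gam D3 (umul y z).
Proof.
move=> cl /gamE [uy yD yt] /gamE [uz zD zt]; apply/gamE; split; first exact: umul_ultra.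
  apply: (ultraW uy _ yD) => u Du; apply: (ultraW uz _ (ultraI uz zD (zt (maxpos u)))).
  by move=> v [Dv tv]; apply: cl.
move=> N; apply: (ultraW uy _ (yt N)) => u tu; apply: (ultraW uz _ (zt N)) => v tv.
by rewrite /tl all_cat; apply/andP.
Qed.

Lemma MinIdem D : catcl D D D -> (exists p, gam D p) ->
  exists p, [/\ gam D p, umul p p = p &
    forall e, gam D e -> umul e e = e -> umul e p = e -> umul p e = e -> e = p].
Proof.
move=> cl ne.
have [M [F0M [[q Kq] [HM maxM]]]] := @zorn_K _ (fam0 D) (fun K0 y => gam D y)
   (fun K1 K2 y h Ry => Ry) (fun H y Ry => gam_ultra Ry) ne
   (fun y z Ry Kz => gam_umul cl Ry Kz).
have KMg : forall z, K M z -> gam D z.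
  by move=> z [uz hz]; split => // X /F0M; apply: hz.
have [p [KMp pp]] : exists p, K M p /\ umul p p = p.
  apply: Ellis.
  - move=> z uz hz; split => // A MA; apply: hz => y [_ ]; by apply.
  - by move=> y [].
  - by exists q.
  - by move=> y z Ky Kz; apply: (HM) => //; apply: KMg.
exists p; split => //; first exact: KMg.
move=> e ge ee ep pe.
have ue := gam_ultra ge.
pose X2 := fun z => exists y, K (fam0 D) y /\ z = umul y e.
have cl2 := @image_closed _ (fam0 D) e ue.
have eM : K M e by rewrite -ep; apply: (HM) => //.
have : forall A, filt X2 A -> M A.
  apply: maxM.
  - move=> A MA _ [y [Ky ->]]; have := HM y e Ky eM; by case=> _ h; apply: h.
  - exists (umul e e); split; first exact: umul_ultra.
    by move=> A; apply; exists e.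
  - move=> y' z' gy' [uz' hz']; have [y [Ky ->]] := cl2 z' uz' hz'.
    split; first by apply: umul_ultra; [exact: gam_ultra gy'|apply: umul_ultra => //; exact: gam_ultra Ky].
    move=> A; apply; exists (umul y' y); split; last by rewrite umulA.
    exact: gam_umul cl gy' Ky.
move=> FM; have [y [Ky pe']] : X2 p.
  apply: cl2; first by case: KMp.
  by move=> A /FM; case: KMp => _; apply.
by rewrite -pe pe' umulA ee.
Qed.

Lemma Below D' V p : catcl V D' V -> catcl D' V V -> catcl V V V -> (exists y, gam V y) ->
  gam D' p -> umul p p = p ->
  exists r, [/\ gam V r, umul r r = r, umul r p = r & umul p r = r].
Proof.
move=> c1 c2 c3 [y0 gy0] gp pp.
have up := gam_ultra gp.
have [u [[y [gy ->]] uu]] : exists u, (exists y, gam V y /\ u = umul y p) /\ umul u u = u.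
  apply: Ellis.
  - exact: image_closed.
  - by move=> _ [y [gy ->]]; apply: umul_ultra => //; exact: gam_ultra gy.
  - by exists (umul y0 p); exists y0.
  - move=> _ _ [y1 [g1 ->]] [y2 [g2 ->]]; exists (umul (umul y1 p) y2); split.
      by apply: gam_umul c3 _ g2; apply: gam_umul c1 g1 gp.
    by rewrite [RHS]umulA.
set w := umul y p in uu *.
have up' : umul w p = w by rewrite /w umulA pp.
exists (umul p w); split.
- by apply: (gam_umul c2 gp); apply: (gam_umul c1 gy gp).
- by rewrite umulA -[umul w (umul p w)]umulA up' uu.
- by rewrite umulA up'.
- by rewrite -umulA pp.
Qed.

Definition img (f : S -> S) (p : fam S) : fam S := fun A => p (fun u => A (f u)).

Lemma img_ultra f p : ultra p -> ultra (img f p).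
Proof.
move=> up; split.
- by move=> X Y hX hY; exact: (ultraI up hX hY).
- by move=> X Y XY; apply: (ultraW up) => u; apply: XY.
- exact: (ultra0 up).
- by move=> X; apply: (@ultraC _ p (fun u => X (f u)) up).
Qed.

Lemma img_umul f p q : (forall u v, f (u ++ v) = f u ++ f v) ->
  img f (umul p q) = umul (img f p) (img f q).
Proof.
move=> hf; rewrite /img /umul; apply: funext => A; congr p; apply: funext => u.
by congr q; apply: funext => v; rewrite hf.
Qed.

Lemma img_gam f D1 D2 p : (forall u, D1 u -> D2 (f u)) -> (forall N u, tl N u -> tl N (f u)) ->
  gam D1 p -> gam D2 (img f p).
Proof.
move=> h1 h2 /gamE [up pD pt]; apply/gamE; split; first exact: img_ultra.
  exact: (ultraW up _ pD).
by move=> N; apply: (ultraW up _ (pt N)); apply: h2.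
Qed.

Lemma img_id f D p : gam D p -> (forall u, D u -> f u = u) -> img f p = p.
Proof.
move=> /gamE [up pD pt] h; apply: ultra_eq => //; first exact: img_ultra.
move=> A pA; apply: (ultraW up _ (ultraI up pD pA)) => u [Du Au].
by rewrite -(h u Du).
Qed.

End Gam.


Section Lists.
Variable T : eqType.

Lemma mem_collapse (s : seq T) : {subset collapse s <= s}.
Proof.
elim: s => [|a s IH] // y.
have h : y \in collapse (a :: s) -> y \in a :: collapse s.
  rewrite /=; case: (collapse s) => [|b u] //.
  by case: ifP => // _ hy; rewrite inE hy orbT.
move/h; rewrite !inE => /orP [->//|/IH ->]; by rewrite orbT.
Qed.

Lemma collapse_cons (a : T) s :
  collapse (a :: s) = match collapse s with
                      | [::] => [:: a]
                      | b :: u => if a == b then b :: u else a :: b :: u end.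
Proof. by []. Qed.

Lemma collapse_idem (s : seq T) : collapse (collapse s) = collapse s.
Proof.
elim: s => [|a s IH] //; rewrite collapse_cons; case E: (collapse s) => [|b u] //.
case: ifP => [_|hab]; first by rewrite -E.
by rewrite collapse_cons -E IH E hab.
Qed.

Lemma collapse_cat_collapse (s w : seq T) : collapse (s ++ collapse w) = collapse (s ++ w).
Proof. elim: s => [|a s IH] /=; first exact: collapse_idem. by rewrite IH. Qed.

Lemma size_collapse_cat (s w : seq T) : size (collapse w) <= size (collapse (s ++ w)).
Proof.
elim: s => [|a s IH] //=; apply: (leq_trans IH).
case: (collapse (s ++ w)) => [|b u] //; case: ifP => //= _; exact: leqnSn.
Qed.

Definition red (B : seq T) (s : seq T) := collapse (filter (fun c => c \notin B) s).

Lemma red_cat B (t u : seq T) : red B (t ++ red B u) = red B (t ++ u).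
Proof.
rewrite /red !filter_cat.
have -> : [seq c <- collapse [seq c <- u | c \notin B] | c \notin B] =
          collapse [seq c <- u | c \notin B].
  apply/all_filterP/allP => y /mem_collapse; by rewrite mem_filter => /andP [].
by rewrite collapse_cat_collapse.
Qed.

Lemma size_red_cat B (t u : seq T) : size (red B u) <= size (red B (t ++ u)).
Proof. by rewrite /red filter_cat; apply: size_collapse_cat. Qed.

Lemma red_mem A B (u : seq T) : all (fun c => c \in A ++ B) u -> all (fun c => c \in A) (red B u).
Proof.
move=> /allP h; apply/allP => y /mem_collapse; rewrite mem_filter => /andP [nB yu].
by move: (h y yu); rewrite mem_cat (negbTE nB) orbF.
Qed.

Fixpoint allseq (X : seq T) n : seq (seq T) :=
  if n is n'.+1 then [::] :: [seq a :: w | a <- X, w <- allseq X n'] else [:: [::]].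

Lemma mem_allseq X n w : all (fun a => a \in X) w -> size w <= n -> w \in allseq X n.
Proof.
elim: n w => [|n IH] [|a w] //= /andP [aX wX] hs.
by rewrite inE; apply/orP; right; apply: allpairs_f => //; apply: IH.
Qed.

Lemma allseq_mem X n w : w \in allseq X n -> all (fun a => a \in X) w /\ size w <= n.
Proof.
elim: n w => [|n IH] w /=; first by rewrite inE => /eqP ->.
rewrite inE => /orP [/eqP -> //|/allpairsP [[a w'] [/= aX w'in ->]]].
by have [h1 h2] := IH _ w'in; rewrite /= aX h1.
Qed.

End Lists.

Lemma sorted_rcons_lt (s : seq nat) j : sorted ltn (rcons s j) -> sorted ltn s /\ all (fun i => i < j) s.
Proof.
rewrite (sorted_pairwise ltn_trans) -cats1 pairwise_cat => /and3P [h1 h2 _].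
split; first by rewrite (sorted_pairwise ltn_trans).
by move: h1; rewrite allrel1r.
Qed.

Lemma sorted_size_le (s : seq nat) m : sorted ltn s -> all (fun i => i < m) s -> size s <= m.
Proof.
move=> ss hs; rewrite -(size_iota 0 m); apply: uniq_leq_size.
  by apply: sorted_uniq ss; [exact: ltn_trans|exact: ltnn].
by move=> i /(allP hs); rewrite mem_iota.
Qed.


Section Concrete.
Variables (T : eqType) (B : seq T) (x : T).
Hypothesis hxB : x \notin B.
Notation S := (seq (nat * T)).

Definition sgs (c : T) (w : S) : S := subst x w c.
Definition DWb (u : S) : bool := sorted ltn (map fst u) && all (fun e => e.2 \in B) u.
Definition DWVb (u : S) : bool :=
  sorted ltn (map fst u) && all (fun e => (e.2 \in B) || (e.2 == x)) u.
Definition DVb (u : S) : bool := DWVb u && occurs x u.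
Definition DW (u : S) : Prop := DWb u.
Definition DWV (u : S) : Prop := DWVb u.
Definition DV (u : S) : Prop := DVb u.

Lemma sgs_cat c u v : sgs c (u ++ v) = sgs c u ++ sgs c v.
Proof. exact: map_cat. Qed.

Lemma fst_sgs c u : map fst (sgs c u) = map fst u.
Proof. by elim: u => [|e u IH] //=; rewrite IH. Qed.

Lemma tl_sgs c N u : tl N u -> tl N (sgs c u).
Proof. by rewrite /tl /sgs /subst all_map. Qed.

Lemma maxpos_ge (u : S) e : e \in u -> e.1 <= maxpos u.
Proof. by move=> eu; rewrite /maxpos; apply: (@leq_bigmax_seq _ u xpredT (fun e => e.1) e). Qed.

Lemma sorted_catpos (u v : S) : sorted ltn (map fst u) -> sorted ltn (map fst v) ->
  tl (maxpos u) v -> sorted ltn (map fst (u ++ v)).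
Proof.
move=> su sv tv; rewrite map_cat (sorted_pairwise ltn_trans) pairwise_cat.
move: su sv; rewrite !(sorted_pairwise ltn_trans) => -> ->; rewrite !andbT.
apply/allrelP => a b /mapP [e eu ->] /mapP [e' ev ->].
apply: (leq_ltn_trans (maxpos_ge eu)); exact: (allP tv e' ev).
Qed.

Lemma catcl_DWV : catcl DWV DWV DWV.
Proof.
move=> u v /andP [su au] /andP [sv av] tv; apply/andP; split; first exact: sorted_catpos.
by rewrite all_cat au av.
Qed.

Lemma catcl_DW : catcl DW DW DW.
Proof.
move=> u v /andP [su au] /andP [sv av] tv; apply/andP; split; first exact: sorted_catpos.
by rewrite all_cat au av.
Qed.

Lemma catcl_VD : catcl DV DWV DV.
Proof.
move=> u v /andP [hu ou] hv tv; apply/andP; split; first exact: catcl_DWV.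
by rewrite /occurs has_cat; apply/orP; left.
Qed.

Lemma catcl_DV : catcl DWV DV DV.
Proof.
move=> u v hu /andP [hv ov] tv; apply/andP; split; first exact: catcl_DWV.
by rewrite /occurs has_cat; apply/orP; right.
Qed.

Lemma catcl_VV : catcl DV DV DV.
Proof. move=> u v hu /andP [hv ov] tv; exact: catcl_VD. Qed.

Lemma gam_mono (D1 D2 : S -> Prop) (p : fam S) : (forall u, D1 u -> D2 u) -> gam D1 p -> gam D2 p.
Proof.
move=> h /gamE [up pD pt]; apply/gamE; split => //; exact: (ultraW up _ pD).
Qed.

Definition pu : fam S := fun X => X [::].

Lemma gam_pu : gam DW pu.
Proof.
have up : ultra pu.
  split; [by move=> X Y hX hY; split|by move=> X Y h; apply: h|by []|].
  by move=> X; case: (EM (X [::])) => h; [left|right].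
by apply/gamE; split.
Qed.

Lemma gam_DV_ne : exists y, gam DV y.
Proof.
have : fip (fam0 DV).
  move=> l hl.
  suff [N0 hN] : exists N0, forall N, N0 < N -> allL l [:: (N, x)].
    by exists [:: (N0.+1, x)]; apply: hN.
  elim: l hl => [|X l IH] hl.
    by exists 0 => N _ X [].
  have [N0 hN] := IH (fun Y hY => hl Y (or_intror hY)).
  case: (hl X (or_introl erefl)) => [->|[M ->]].
    exists N0 => N hN0 Y [<-|hY]; last exact: hN.
    by rewrite /DV /DVb /DWVb /occurs /= eqxx orbT.
  exists (maxn N0 M) => N; rewrite gtn_max => /andP [h1 h2] Y [<-|hY]; last exact: hN.
  by rewrite /tl /= h2.
move/ultrafilter_lemma => [y [uy hy]]; exists y; split => //.
Qed.

Lemma subst_id (u : S) c : all (fun e => e.2 != x) u -> subst x u c = u.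
Proof.
elim: u => [|[m a] u IH] //= /andP [/= ax hu].
by rewrite (negbTE ax) IH.
Qed.

Lemma DW_sgs c u : DW u -> sgs c u = u.
Proof.
move=> /andP [_ au]; apply: subst_id; apply/allP => e /(allP au) eB.
by apply/eqP => ex; move: hxB; rewrite -ex eB.
Qed.

Lemma DWV_sgs b u : b \in B -> DWV u -> DW (sgs b u).
Proof.
move=> bB /andP [su au]; apply/andP; split; first by rewrite fst_sgs.
rewrite /sgs /subst all_map; apply/allP => e /(allP au) /=.
by case: ifP => // _; rewrite orbF.
Qed.

Section Idem.
Variables (p r : fam S).
Hypotheses (gp : gam DW p) (pp : umul p p = p) (gr : gam DV r) (rr : umul r r = r)
  (rp : umul r p = r) (pr : umul p r = r)
  (minp : forall e, gam DW e -> umul e e = e -> umul e p = e -> umul p e = e -> e = p).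

Lemma imgp c : img (sgs c) p = p.
Proof. by apply: (img_id gp) => u; apply: DW_sgs. Qed.

Definition sc c := img (sgs c) r.

Lemma sc_ultra c : ultra (sc c).
Proof. apply: img_ultra; exact: gam_ultra gr. Qed.

Lemma sc_mul c p1 q1 : img (sgs c) (umul p1 q1) = umul (img (sgs c) p1) (img (sgs c) q1).
Proof. apply: img_umul => u v; exact: sgs_cat. Qed.

Lemma sc_p c : umul (sc c) p = sc c.
Proof. by rewrite /sc -[X in umul _ X](imgp c) -sc_mul rp. Qed.
Lemma p_sc c : umul p (sc c) = sc c.
Proof. by rewrite /sc -[X in umul X _](imgp c) -sc_mul pr. Qed.
Lemma sc_sc c : umul (sc c) (sc c) = sc c.
Proof. by rewrite /sc -sc_mul rr. Qed.

Lemma scB b : b \in B -> sc b = p.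
Proof.
move=> bB; apply: minp.
- apply: (img_gam (D1 := DWV)) => //; first by move=> u; apply: DWV_sgs.
    by move=> N u; apply: tl_sgs.
  apply: gam_mono gr => u; by case/andP.
- exact: sc_sc.
- exact: sc_p.
- exact: p_sc.
Qed.

Fixpoint Q (u : seq T) : fam S :=
  if u is c :: u' then umul (sc c) (Q u') else p.

Lemma Q_ultra u : ultra (Q u).
Proof. elim: u => [|c u IH] /=; [exact: gam_ultra gp|exact: umul_ultra (sc_ultra c) IH]. Qed.

Lemma pQ u : umul p (Q u) = Q u.
Proof. case: u => [|c u] //=; by rewrite -umulA p_sc. Qed.

Lemma Q_red u : Q u = Q (red B u).
Proof.
elim: u => [|c u IH] //=; rewrite /red /=.
case: ifP => cB; last first.
  by move/negbFE: cB => /scB ->; rewrite pQ IH.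
rewrite collapse_cons -/(red B u) IH.
case E: (red B u) => [|b w] //=.
case: ifP => // /eqP <-; by rewrite -umulA sc_sc.
Qed.

Lemma Q1 c : Q [:: c] = sc c.
Proof. exact: sc_p. Qed.

End Idem.
End Concrete.


Lemma r_all (U : Type) (I : eqType) (l : seq I) (X : I -> U -> Prop) q : ultra q ->
  (forall i, i \in l -> q (X i)) -> q (fun v => forall i, i \in l -> X i v).
Proof.
move=> uq; elim: l => [|j l IH] h.
  by apply: (ultraW uq _ (ultraT uq)) => v _ i.
have := ultraI uq (h j (mem_head _ _)) (IH (fun i hi => h i (mem_behead (s := j :: l) hi))).
apply: (ultraW uq) => v [h1 h2] i; rewrite inE => /orP [/eqP -> //|]; exact: h2.
Qed.

Lemma class_ex (U : Type) (n : nat) (col : U -> 'I_n) q : ultra q -> exists k, q (fun v => col v = k).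
Proof.
move=> uq; case: (EM (exists k, q (fun v => col v = k))) => // hn; exfalso.
have : q (fun v => forall k, k \in enum 'I_n -> col v <> k).
  apply: r_all => // k _; case: (@ultraC _ q (fun v => col v = k) uq) => // h.
  by case: hn; exists k.
move/(ultra_ne uq) => [v hv]; exact: (hv (col v) (mem_enum _ _)).
Qed.

Fixpoint build (S : Type) (g : seq S -> S) n : seq S :=
  if n is n'.+1 then rcons (build g n') (g (build g n')) else [::].

Lemma size_build S (g : seq S -> S) n : size (build g n) = n.
Proof. by elim: n => //= n IH; rewrite size_rcons IH. Qed.

Lemma build_map S (g : seq S -> S) n : build g n = map (fun i => g (build g i)) (iota 0 n).
Proof.
elim: n => // n IH.
have -> : build g n.+1 = rcons (build g n) (g (build g n)) by [].
by rewrite -[in RHS](addn1 n) iotaD map_cat add0n -IH cats1.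
Qed.

Lemma nth_build S (g : seq S -> S) d n i : i < n -> nth d (build g n) i = g (build g i).
Proof. by move=> hi; rewrite build_map (nth_map 0) ?size_iota // nth_iota. Qed.

Section Seq.
Variables (T : eqType) (A B : seq T) (x : T).
Hypothesis hxB : x \notin B.
Variables (F : seq (seq T)) (n : nat) (col : seq (nat * T) -> 'I_n).
Notation S := (seq (nat * T)).
Variables (p r : fam S).
Hypotheses (gp : gam (DW B) p) (pp : umul p p = p) (gr : gam (DV B x) r) (rr : umul r r = r)
  (rp : umul r p = r) (pr : umul p r = r)
  (minp : forall e, gam (DW B) e -> umul e e = e -> umul e p = e -> umul p e = e -> e = p).
Variable kappa : seq T -> 'I_n.
Hypothesis hk : forall s, Q x p r s (fun v => col v = kappa s).

Notation QQ := (Q x p r).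
Definition C s := fun v : S => col v = kappa s.
Definition L := \max_(s <- F) size s.
Definition prodw (prev : seq S) ns cs := subst_prod x (fun i => nth [::] prev i) ns cs.

Lemma L_ge s : s \in F -> size s <= L.
Proof. by move=> sF; apply: (@leq_bigmax_seq _ F xpredT size s). Qed.

Lemma eq_subst_prod (w1 w2 : nat -> S) ns cs : (forall i, i \in ns -> w1 i = w2 i) ->
  subst_prod x w1 ns cs = subst_prod x w2 ns cs.
Proof.
elim: ns cs => [|j ns IH] [|c cs] h //.
rewrite /subst_prod /= h ?mem_head //; congr (_ ++ _).
by apply: IH => i hi; apply: h; rewrite inE hi orbT.
Qed.

Lemma prodw_old prev v ns cs : all (fun i => i < size prev) ns ->
  prodw (rcons prev v) ns cs = prodw prev ns cs.
Proof.
move=> /allP h; apply: eq_subst_prod => i /h hi; by rewrite nth_rcons hi.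
Qed.

Lemma prodw_new prev v ns cs c : size cs = size ns -> all (fun i => i < size prev) ns ->
  prodw (rcons prev v) (rcons ns (size prev)) (rcons cs c) = prodw prev ns cs ++ sgs x c v.
Proof.
move=> hs ha; rewrite /prodw /subst_prod zip_rcons // map_rcons flatten_rcons /=.
rewrite nth_rcons ltnn eqxx; congr (_ ++ _); exact: prodw_old.
Qed.

Definition Inv (prev : seq S) :=
  (forall ns cs u s, sorted ltn ns -> all (fun i => i < size prev) ns -> size cs = size ns ->
     all (fun c => c \in A ++ B) cs -> all (fun c => c \in A ++ B) u -> s \in F ->
     red B (cs ++ u) = s -> QQ u (fun z => C s (prodw prev ns cs ++ z))) /\
  (forall ns cs s, sorted ltn ns -> all (fun i => i < size prev) ns -> size cs = size ns ->
     all (fun c => c \in A ++ B) cs -> ns != [::] -> s \in F -> red B cs = s ->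
     C s (prodw prev ns cs)).

Definition Good (prev : seq S) (v : S) :=
  [/\ DV B x v, tl (maxpos (flatten prev)) v,
  (forall ns cs c u s, sorted ltn ns -> all (fun i => i < size prev) ns -> size cs = size ns ->
     all (fun c => c \in A ++ B) cs -> c \in A ++ B -> all (fun a => a \in A) u -> size u <= L ->
     s \in F -> red B (cs ++ c :: u) = s ->
     QQ u (fun z => C s (prodw prev ns cs ++ sgs x c v ++ z))) &
  (forall ns cs c s, sorted ltn ns -> all (fun i => i < size prev) ns -> size cs = size ns ->
     all (fun c => c \in A ++ B) cs -> c \in A ++ B -> s \in F -> red B (rcons cs c) = s ->
     C s (prodw prev ns cs ++ sgs x c v))].

Lemma Q_red' u : QQ u = QQ (red B u).
Proof. exact: (Q_red hxB gp pp gr rr rp pr minp). Qed.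

Lemma Inv0 : Inv [::].
Proof.
split.
  move=> [|i ns] [|c cs] u s _ //= _ _ _ _ _ hs.
  rewrite Q_red' hs; exact: hk.
by move=> [|i ns].
Qed.

Lemma good_ex prev : Inv prev -> exists v, Good prev v.
Proof.
move=> [I2 I3]; set m := size prev.
have ur : ultra r := gam_ultra gr.
pose G2 := fun v => forall ns, ns \in allseq (iota 0 m) m -> forall cs, cs \in allseq (A ++ B) m ->
  forall c, c \in A ++ B -> forall u, u \in allseq A L -> forall s, s \in F ->
  (sorted ltn ns /\ size cs = size ns /\ red B (cs ++ c :: u) = s) ->
  QQ u (fun z => C s (prodw prev ns cs ++ sgs x c v ++ z)).
pose G3 := fun v => forall ns, ns \in allseq (iota 0 m) m -> forall cs, cs \in allseq (A ++ B) m ->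
  forall c, c \in A ++ B -> forall s, s \in F ->
  (sorted ltn ns /\ size cs = size ns /\ red B (rcons cs c) = s) ->
  C s (prodw prev ns cs ++ sgs x c v).
have allm : forall ns, ns \in allseq (iota 0 m) m -> all (fun i => i < m) ns.
  move=> ns /allseq_mem [h _]; apply/allP => i /(allP h); by rewrite mem_iota.
have allAB : forall cs, cs \in allseq (A ++ B) m -> all (fun c => c \in A ++ B) cs.
  by move=> cs /allseq_mem [].
have rG2 : r G2.
  apply: r_all => // ns hns; apply: r_all => // cs hcs; apply: r_all => // c hc.
  apply: r_all => // u hu; apply: r_all => // s hs.
  case: (EM (sorted ltn ns /\ size cs = size ns /\ red B (cs ++ c :: u) = s)) => [[h1 [h2 h3]]|hn];
    last by apply: (ultraW ur _ (ultraT ur)) => v _ /hn.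
  have uA : all (fun a => a \in A) u by case: (allseq_mem hu).
  have cuAB : all (fun c => c \in A ++ B) (c :: u).
    rewrite /= hc; apply/allP => a /(allP uA); by rewrite mem_cat => ->.
  have := I2 ns cs (red B (c :: u)) s h1 (allm _ hns) h2 (allAB _ hcs) _ hs _.
  rewrite -Q_red' /= => h; apply: (ultraW ur _ (h _ _)) => //.
  - apply/allP => a /(allP (red_mem cuAB)); by rewrite mem_cat => ->.
  - by rewrite red_cat.
have rG3 : r G3.
  apply: r_all => // ns hns; apply: r_all => // cs hcs; apply: r_all => // c hc.
  apply: r_all => // s hs.
  case: (EM (sorted ltn ns /\ size cs = size ns /\ red B (rcons cs c) = s)) => [[h1 [h2 h3]]|hn];
    last by apply: (ultraW ur _ (ultraT ur)) => v _ /hn.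
  have := I2 ns cs [:: c] s h1 (allm _ hns) h2 (allAB _ hcs) _ hs _.
  rewrite (Q1 hxB gp rp) => h; apply: (ultraW ur _ (h _ _)) => //.
  - by rewrite /= hc.
  - by rewrite cats1.
have rV : r (DV B x) by case/gamE: gr.
have rT : r (tl (maxpos (flatten prev))) by case/gamE: gr.
have [v [[[Vv Tv] g2] g3]] := ultra_ne ur (ultraI ur (ultraI ur (ultraI ur rV rT) rG2) rG3).
exists v; split => //.
- move=> ns cs c u s h1 h2 h3 h4 h5 h6 h7 h8 h9.
  apply: g2 => //.
  + apply: mem_allseq; last exact: sorted_size_le.
    apply/allP => i /(allP h2); by rewrite mem_iota.
  + by apply: mem_allseq => //; rewrite h3; exact: sorted_size_le.
  + exact: mem_allseq.
- move=> ns cs c s h1 h2 h3 h4 h5 h6 h7.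
  apply: g3 => //.
  + apply: mem_allseq; last exact: sorted_size_le.
    apply/allP => i /(allP h2); by rewrite mem_iota.
  + by apply: mem_allseq => //; rewrite h3; exact: sorted_size_le.
Qed.

Lemma decomp_ns (ns : seq nat) m : sorted ltn ns -> all (fun i => i < m.+1) ns ->
  all (fun i => i < m) ns \/ exists ns0, [/\ ns = rcons ns0 m, sorted ltn ns0 & all (fun i => i < m) ns0].
Proof.
case/lastP: ns => [|ns0 j]; first by left.
move=> /sorted_rcons_lt [s0 a0]; rewrite all_rcons => /andP [hj _].
case: (ltngtP j m) => [jm|mj|ejm].
- left; rewrite all_rcons jm /=; apply/allP => i /(allP a0) ij; exact: ltn_trans ij jm.
- by move: hj; rewrite ltnS leqNgt mj.
- by subst j; right; exists ns0; split.
Qed.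

Lemma decomp_cs (cs : seq T) (ns0 : seq nat) j : size cs = size (rcons ns0 j) ->
  exists cs0 c, cs = rcons cs0 c /\ size cs0 = size ns0.
Proof.
case/lastP: cs => [|cs0 c]; first by rewrite size_rcons.
by rewrite !size_rcons => -[h]; exists cs0, c.
Qed.

Lemma Inv_step prev v : Inv prev -> Good prev v -> Inv (rcons prev v).
Proof.
move=> [I2 I3] [Vv Tv g2 g3]; split.
- move=> ns cs u s hs ha hsz hcs hu hF hred; rewrite size_rcons in ha.
  case: (decomp_ns hs ha) => [ha'|[ns0 [e s0 a0]]].
    rewrite prodw_old //; exact: I2.
  subst ns; have [cs0 [c [e hsz0]]] := decomp_cs hsz; subst cs.
  move: hcs; rewrite all_rcons => /andP [hc hcs0].
  rewrite prodw_new // Q_red'.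
  have e : (fun z => C s ((prodw prev ns0 cs0 ++ sgs x c v) ++ z)) =
           (fun z => C s (prodw prev ns0 cs0 ++ sgs x c v ++ z)).
    by apply: funext => z; rewrite catA.
  rewrite e; apply: g2 => //.
  + exact: red_mem.
  + apply: leq_trans (size_red_cat _ (rcons cs0 c) u) _; rewrite hred; exact: L_ge.
  + by rewrite -cat_rcons red_cat.
- move=> ns cs s hs ha hsz hcs hne hF hred; rewrite size_rcons in ha.
  case: (decomp_ns hs ha) => [ha'|[ns0 [e s0 a0]]].
    rewrite prodw_old //; exact: I3.
  subst ns; have [cs0 [c [e hsz0]]] := decomp_cs hsz; subst cs.
  move: hcs; rewrite all_rcons => /andP [hc hcs0].
  rewrite prodw_new //; exact: g3.
Qed.

Lemma tl_mono N1 N2 (v : S) : N1 <= N2 -> tl N2 v -> tl N1 v.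
Proof. move=> h; apply: sub_all => e; exact: leq_ltn_trans h. Qed.

Lemma main_seq : exists w : nat -> S,
  basic_seq x B w /\ (forall i, occurs x (w i)) /\
  (forall (ns ns' : seq nat) (cs cs' : seq T),
       ns != [::] -> sorted ltn ns -> size cs = size ns ->
       all (fun c => c \in A ++ B) cs ->
       ns' != [::] -> sorted ltn ns' -> size cs' = size ns' ->
       all (fun c => c \in A ++ B) cs' ->
       reduce_str A B cs = reduce_str A B cs' ->
       reduce_str A B cs \in F ->
       col (subst_prod x w ns cs) = col (subst_prod x w ns' cs')).
Proof.
have gex : forall prev, exists v, Inv prev -> Good prev v.
  move=> prev; case: (EM (Inv prev)) => h; last by exists [::].
  by have [v hv] := good_ex h; exists v.
case: (choice gex) => g hg.
have Ib : forall m, Inv (build g m).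
  elim => [|m IH]; [exact: Inv0 | exact: Inv_step IH (hg _ IH)].
have Gb : forall m, Good (build g m) (g (build g m)) := fun m => hg _ (Ib m).
pose w i := g (build g i).
have Vw : forall i, DV B x (w i) by move=> i; case: (Gb i).
have DWVw : forall i, DWV B x (w i) by move=> i; case/andP: (Vw i).
have Hs : forall s, sorted ltn s -> DWV B x (flatten (map w s)).
  elim/last_ind => [|s j IH] hs; first by [].
  have [s0 a0] := sorted_rcons_lt hs.
  rewrite map_rcons flatten_rcons; apply: catcl_DWV (IH s0) (DWVw j) _.
  case: (Gb j) => _ Tj _ _; apply: tl_mono Tj.
  apply/bigmax_leqP_seq => e he _; apply: maxpos_ge.
  move: he => /flattenP [t /mapP [i hi ->] et]; apply/flattenP; exists (w i) => //.
  rewrite build_map; apply: map_f; rewrite mem_iota /=; exact: (allP a0).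
exists w; split; [split|split].
- move=> i; move: (Vw i); rewrite /DV /DVb /DWVb => /andP [/andP [s1 a1] o1].
  rewrite /located_word s1 a1 andbT; by case: (w i) o1.
- move=> s sne ss; move: (Hs s ss); rewrite /DWV /DWVb => /andP [s1 a1].
  rewrite /located_word s1 a1 andbT; clear s1 a1; case: s sne ss => // j s _ _ /=.
  move: (Vw j); rewrite /DV /DVb => /andP [_]; by case: (w j).
- by move=> i; case/andP: (Vw i).
have col1 : forall ns cs, ns != [::] -> sorted ltn ns -> size cs = size ns ->
    all (fun c => c \in A ++ B) cs -> reduce_str A B cs \in F ->
    col (subst_prod x w ns cs) = kappa (reduce_str A B cs).
  move=> ns cs hne hs hsz hcs hF.
  set m := (\max_(i <- ns) i).+1.
  have am : all (fun i => i < m) ns.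
    apply/allP => i hi; rewrite ltnS; exact: (@leq_bigmax_seq _ ns xpredT id i).
  have := (Ib m).2 ns cs (reduce_str A B cs) hs _ hsz hcs hne hF erefl.
  rewrite size_build => /(_ am); rewrite /C /prodw => <-; congr col.
  apply: eq_subst_prod => i /(allP am) im; by rewrite /w nth_build.
move=> ns ns' cs cs' ne s hs hcs ne' s' hs' hcs' hred hF.
rewrite col1 // col1 //; [by rewrite hred | by rewrite -hred].
Qed.

End Seq.


Theorem mainTheorem20 (T : eqType) (A B : seq T) (x : T)
  (hAB : forall a, a \in A -> a \notin B)
  (hx : x \notin A ++ B)
  (F : seq (seq T)) (hF : all (reduced_in A) F)
  (r : nat) (col : seq (nat * T) -> 'I_r) :
  exists w : nat -> seq (nat * T),
    basic_seq x B w /\ (forall i, occurs x (w i)) /\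
    (forall (ns ns' : seq nat) (cs cs' : seq T),
       ns != [::] -> sorted ltn ns -> size cs = size ns ->
       all (fun c => c \in A ++ B) cs ->
       ns' != [::] -> sorted ltn ns' -> size cs' = size ns' ->
       all (fun c => c \in A ++ B) cs' ->
       reduce_str A B cs = reduce_str A B cs' ->
       reduce_str A B cs \in F ->
       col (subst_prod x w ns cs) = col (subst_prod x w ns' cs')).
Proof.
have hxB : x \notin B by move: hx; rewrite mem_cat negb_or => /andP [].
have [p [gp pp minp]] := MinIdem (@catcl_DW T B) (ex_intro _ _ (gam_pu B)).
have gp' : gam (DWV B x) p.
  apply: gam_mono gp => u; rewrite /DW /DWV /DWb /DWVb => /andP [-> a] /=.
  by apply: sub_all a => e ->.
have [r0 [gr rr rp pr]] := Below (@catcl_VD T B x) (@catcl_DV T B x) (@catcl_VV T B x)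
  (gam_DV_ne B x) gp' pp.
have [kappa hk] := choice (fun s => class_ex col (Q_ultra gp gr s)).
exact: (main_seq A hxB F gp pp gr rr rp pr minp hk).
Qed.
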